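(* Let $k \ge 1$, $m = 4k+3$, $\theta = 2\pi/m$, and let $P$ be a finite point set in general position. For any two vertices $u, w \in P$, let $M$ be the midpoint of the side of $T_{uw}$ opposite $u$ and let $\alpha$ be the unsigned angle between $uw$ and $uM$. Then the $\theta_m$-graph on $P$ contains a path from $u$ to $w$ of length at most $$\left(\frac{\cos\alpha}{\cos(\theta/2)} + \frac{(\cos\alpha\tan(\theta/2) + \sin\alpha)\cos(\theta/4)}{\cos(\theta/2) - \sin(3\theta/4)}\right)|uw|.$$
   Context: Cones: for $m \ge 2$, $\theta = 2\pi/m$; around each point $u$ draw $m$ rays with consecutive angular separation $\theta$, oriented so the vertical upward ray from $u$ bisects a cone $C_0^u$; cones numbered $C_0^u,\dots,C_{m-1}^u$ clockwise, same orientation at every point. General position: no two points on a line parallel to a cone boundary ray, no two on a line perpendicular to a cone bisector, no three collinear. The $\theta_m$-graph on $P$: for each $u\in P$ and each cone $C_i^u$ containing another point of $P$, add an edge from $u$ to the point of $C_i^u$ whose orthogonal projection onto the bisector of $C_i^u$ is closest to $u$; edges weighted by Euclidean length. Canonical triangle: if $w$ lies in cone $C$ of $u$, $T_{uw}$ is the triangle bounded by the two boundary rays of $C$ and the line through $w$ perpendicular to the bisector of $C$. *)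

(* Defs.v *)
From Stdlib Require Import Reals Lra List.
Open Scope R_scope.

Definition pt := (R * R)%type.

Definition edist (p q : pt) : R :=
  sqrt ((fst q - fst p) ^ 2 + (snd q - snd p) ^ 2).

Definition theta (m : nat) : R := 2 * PI / INR m.

(* Direction angle (from the positive x-axis, counterclockwise) of the
   bisector of cone C_i: C_0 is bisected by the upward vertical ray, and
   cones are numbered clockwise. *)
Definition bis_angle (m i : nat) : R := PI / 2 - INR i * theta m.

Definition proj (m i : nat) (u v : pt) : R :=
  (fst v - fst u) * cos (bis_angle m i) + (snd v - snd u) * sin (bis_angle m i).

(* v lies in cone C_i^u (closed cone of half-aperture theta/2 around the
   bisector; boundaries are irrelevant under general position). *)
Definition in_cone (m i : nat) (u v : pt) : Prop :=
  (i < m)%nat /\ v <> u /\ proj m i u v >= edist u v * cos (theta m / 2).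

Definition theta_dir_edge (m : nat) (P : list pt) (u v : pt) : Prop :=
  In u P /\ In v P /\
  exists i, in_cone m i u v /\
    forall w, In w P -> in_cone m i u w -> proj m i u v <= proj m i u w.

Definition theta_edge (m : nat) (P : list pt) (u v : pt) : Prop :=
  theta_dir_edge m P u v \/ theta_dir_edge m P v u.

Fixpoint is_path (E : pt -> pt -> Prop) (u : pt) (l : list pt) (w : pt) : Prop :=
  match l with
  | nil => u = w
  | v :: l' => E u v /\ is_path E v l' w
  end.

Fixpoint path_length (u : pt) (l : list pt) : R :=
  match l with
  | nil => 0
  | v :: l' => edist u v + path_length v l'
  end.

Definition cross (p q r : pt) : R :=
  (fst q - fst p) * (snd r - snd p) - (snd q - snd p) * (fst r - fst p).

Definition general_position (m : nat) (P : list pt) : Prop :=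
  (* no two points on a line parallel to a cone boundary ray *)
  (forall p q i, In p P -> In q P -> p <> q -> (i < m)%nat ->
     let b := bis_angle m i - theta m / 2 in
     (fst q - fst p) * sin b - (snd q - snd p) * cos b <> 0) /\
  (forall p q i, In p P -> In q P -> p <> q -> (i < m)%nat ->
     proj m i p q <> 0) /\
  (forall p q r, In p P -> In q P -> In r P -> p <> q -> p <> r -> q <> r ->
     cross p q r <> 0).

(* Canonical triangle T_uw for w in cone C_i^u: its apex is u, the two other
   vertices lie on the boundary rays of C_i^u at the line through w
   perpendicular to the bisector. *)
Definition tri_vertex (m i : nat) (u w : pt) (s : R) : pt :=
  let h := proj m i u w in
  let b := bis_angle m i + s * (theta m / 2) in
  (fst u + h / cos (theta m / 2) * cos b, snd u + h / cos (theta m / 2) * sin b).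

Definition tri_mid (m i : nat) (u w : pt) : pt :=
  let A := tri_vertex m i u w 1 in
  let B := tri_vertex m i u w (-1) in
  ((fst A + fst B) / 2, (snd A + snd B) / 2).

Definition uangle (u p q : pt) : R :=
  acos (((fst p - fst u) * (fst q - fst u) + (snd p - snd u) * (snd q - snd u))
        / (edist u p * edist u q)).

(* Main.v *)
Require Import Defs.
From Stdlib Require Import Reals Lra List Lia Classical ZArith.
Open Scope R_scope.


Definition Cg (g : R) := cos g / (cos (2*g) - sin (3*g)).
Definition Kg (g : R) := 1 / cos (2*g) + Cg g * (sin (2*g) / cos (2*g)).

Lemma sin3 g : sin (3*g) = 3 * sin g - 4 * sin g ^ 3.
Proof.
  replace (3*g) with (2*g + g) by ring. rewrite sin_plus, sin_2a, cos_2a_sin.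
  pose proof (sin2_cos2 g). unfold Rsqr in *.
  replace (2 * sin g * cos g * cos g) with (2 * sin g * (cos g * cos g)) by ring.
  replace (cos g * cos g) with (1 - sin g * sin g) by lra. ring.
Qed.

Lemma basic_g g : 0 < g -> 14 * g <= PI ->
  0 < sin g /\ 0 < cos g /\ 0 < cos (2*g) /\ 0 < sin (2*g) /\ sin (2*g) < 1/2
  /\ 0 < cos (2*g) - sin (3*g) /\ sin g < cos g.
Proof.
  intros H0 H1. pose proof PI_RGT_0.
  assert (sin g > 0) by (apply sin_gt_0; lra).
  assert (cos g > 0) by (apply cos_gt_0; lra).
  assert (cos (2*g) > 0) by (apply cos_gt_0; lra).
  assert (sin (2*g) > 0) by (apply sin_gt_0; lra).
  assert (sin (2*g) < 1/2).
  { rewrite <- sin_PI6. apply sin_increasing_1; lra. }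
  assert (sin (3*g) < cos (2*g)).
  { rewrite <- sin_shift. apply sin_increasing_1; lra. }
  assert (sin g < cos g).
  { rewrite <- sin_shift. apply sin_increasing_1; lra. }
  repeat split; lra.
Qed.

Lemma CK_pos g : 0 < g -> 14 * g <= PI -> 0 < Cg g /\ 0 < Kg g.
Proof.
  intros H0 H1. destruct (basic_g g H0 H1) as (?&?&?&?&?&?&?).
  assert (0 < Cg g) by (unfold Cg; apply Rdiv_lt_0_compat; lra).
  split; auto. unfold Kg.
  assert (0 < 1 / cos (2*g)) by (apply Rdiv_lt_0_compat; lra).
  assert (0 < sin (2*g) / cos (2*g)) by (apply Rdiv_lt_0_compat; lra).
  nra.
Qed.

Lemma ident1 g : 0 < g -> 14 * g <= PI -> Kg g * (1 + sin g) = Cg g * cos g.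
Proof.
  intros H0 H1. destruct (basic_g g H0 H1) as (?&?&?&?&?&?&?).
  unfold Kg, Cg.
  set (c := cos (2*g)) in *. set (D := c - sin (3*g)) in *.
  set (s := sin (2*g)) in *. set (x := sin g) in *. set (y := cos g) in *.
  assert (Hys : y * s = 2 * x * (1 - x*x)).
  { unfold s; rewrite sin_2a. pose proof (sin2_cos2 g) as HH. unfold Rsqr in HH. fold x y in HH |- *.
    replace (y * (2*x*y)) with (2*x*(y*y)) by ring. replace (y*y) with (1 - x*x) by lra. ring. }
  assert (Hyy : y * y = 1 - x*x) by (pose proof (sin2_cos2 g) as HH; unfold Rsqr in HH; fold x y in HH; lra).
  assert (Hc : c = 1 - 2*x*x) by (unfold c; rewrite cos_2a_sin; fold x; ring).
  assert (HD : D = 1 - 2*x*x - 3*x + 4*x^3) by (unfold D; rewrite Hc, sin3; fold x; ring).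
  replace ((1 / c + y / D * (s / c)) * (1 + x)) with ((D + y*s)*(1+x)/(c*D)) by (field; lra).
  replace (y / D * y) with ((y*y)/D) by (field; lra).
  rewrite Hys, Hyy. field_simplify_eq; try lra. rewrite HD, Hc. ring.
Qed.

Lemma ident1b g : 0 < g -> 14 * g <= PI -> Cg g = Kg g * cos g + Cg g * sin g.
Proof.
  intros H0 H1. destruct (basic_g g H0 H1) as (?&?&?&?&?&?&?).
  pose proof (ident1 g H0 H1) as I1. pose proof (sin2_cos2 g) as HH. unfold Rsqr in HH.
  apply (Rmult_eq_reg_r (1 + sin g)); [|lra].
  replace ((Kg g * cos g + Cg g * sin g) * (1 + sin g)) with
    (cos g * (Kg g * (1 + sin g)) + Cg g * (sin g + sin g * sin g)) by ring.
  rewrite I1. replace (sin g * sin g) with (1 - cos g * cos g) by lra. ring.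
Qed.

Lemma ident2 g : 0 < g -> 14 * g <= PI ->
  Cg g * cos g + Kg g * sin g = Kg g * cos (2*g) + Cg g * sin (2*g).
Proof.
  intros H0 H1. destruct (basic_g g H0 H1) as (?&?&?&?&?&?&?).
  unfold Kg, Cg.
  set (c := cos (2*g)) in *. set (D := c - sin (3*g)) in *.
  set (s := sin (2*g)) in *. set (x := sin g) in *. set (y := cos g) in *.
  assert (Hys : y * s = 2 * x * (1 - x*x)).
  { unfold s; rewrite sin_2a. pose proof (sin2_cos2 g) as HH. unfold Rsqr in HH. fold x y in HH |- *.
    replace (y * (2*x*y)) with (2*x*(y*y)) by ring. replace (y*y) with (1 - x*x) by lra. ring. }
  assert (Hyy : y * y = 1 - x*x) by (pose proof (sin2_cos2 g) as HH; unfold Rsqr in HH; fold x y in HH; lra).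
  assert (Hc : c = 1 - 2*x*x) by (unfold c; rewrite cos_2a_sin; fold x; ring).
  assert (HD : D = 1 - 2*x*x - 3*x + 4*x^3) by (unfold D; rewrite Hc, sin3; fold x; ring).
  replace (y / D * y + (1 / c + y / D * (s / c)) * x) with
     (((y*y)*c + x*(D + y*s))/(c*D)) by (field; lra).
  replace ((1 / c + y / D * (s / c)) * c + y / D * s) with
     ((c*(D + y*s) + c*(y*s))/(c*D)) by (field; lra).
  assert (P1 : 0 < 1 - 2*x*x - 3*x + 4*x^3) by (rewrite <- HD; lra).
  assert (P2 : 0 < 1 - 2*x*x) by (rewrite <- Hc; lra).
  rewrite Hys, Hyy, HD, Hc. field; split; lra.
Qed.


Lemma interp_id A B a b psi :
  (A * cos psi + B * sin psi) * sin (b - a) =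
  (A * cos a + B * sin a) * sin (b - psi) + (A * cos b + B * sin b) * sin (psi - a).
Proof. rewrite !sin_minus. ring. Qed.

Lemma G_ge g psi : 0 < g -> 14 * g <= PI -> g <= psi -> psi <= PI/2 - 2*g ->
  Kg g * cos (2*g) + Cg g * sin (2*g) <= Cg g * cos psi + Kg g * sin psi.
Proof.
  intros H0 H1 Ha Hb. pose proof PI_RGT_0.
  destruct (CK_pos g H0 H1) as [HC HK].
  destruct (basic_g g H0 H1) as (?&?&?&?&?&?&?).
  pose proof (interp_id (Cg g) (Kg g) g (PI/2 - 2*g) psi) as E.
  rewrite ident2 in E by auto.
  rewrite cos_shift, sin_shift in E.
  set (M := Kg g * cos (2*g) + Cg g * sin (2*g)) in *.
  replace (Cg g * sin (2*g) + Kg g * cos (2*g)) with M in E by (unfold M; ring).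
  fold M.
  set (x := psi - g) in *. set (y := PI/2 - 2*g - psi) in *.
  replace (PI/2 - 2*g - g) with (x + y) in E by (unfold x, y; ring).
  rewrite sin_plus in E.
  assert (0 <= sin x) by (apply sin_ge_0; unfold x; lra).
  assert (0 <= sin y) by (apply sin_ge_0; unfold y; lra).
  assert (cos x <= 1) by apply COS_bound.
  assert (cos y <= 1) by apply COS_bound.
  assert (0 < sin (x+y)) by (apply sin_gt_0; unfold x, y; lra).
  rewrite sin_plus in *.
  assert (0 < M) by (unfold M; nra).
  set (G := Cg g * cos psi + Kg g * sin psi) in *.
  assert (M * (sin x * cos y + cos x * sin y) <= G * (sin x * cos y + cos x * sin y)).
  { rewrite E.
    assert (Hq : sin x * cos y + cos x * sin y <= sin y + sin x) by nra.
    apply Rmult_le_compat_l with (r:=M) in Hq; [|lra]. lra. }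
  nra.
Qed.


Lemma right_core C K c s a b X Y p l :
  0 < c -> 0 <= s -> 0 <= C ->
  K * c + C * s <= C * (b*c - a*s) + K * (a*c + b*s) ->
  K * c + C * s <= C * (b*c + a*s) + K * (a*c - b*s) ->
  X = b*p + a*l -> Y = a*p - b*l -> 0 < p -> c * Rabs l <= s * p ->
  K * p + C * Rabs l <= K * Y + C * Rabs X.
Proof.
  intros Hc Hs HC Fp Fm HX HY Hp Hl.
  assert (C * X <= C * Rabs X) by (apply Rmult_le_compat_l; [lra| apply Rle_abs]).
  set (A := K*a + C*b - K).
  assert (HA : c * A >= C * s) by (unfold A; nra).
  assert (HA0 : 0 <= A).
  { assert (0 <= c * A) by nra. nra. }
  cut (K * p + C * Rabs l <= K * Y + C * X); [lra|].
  rewrite HX, HY.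
  destruct (Rle_lt_dec 0 l) as [H0|H0].
  - rewrite Rabs_right in * by lra.
    set (B := C*a - K*b - C).
    assert (HB : c * A + s * B >= 0) by (unfold A, B; nra).
    cut (0 <= p * A + l * B); [unfold A, B; nra|].
    destruct (Rle_lt_dec 0 B). { nra. }
    assert (c * (p*A + l*B) >= 0).
    { assert (c * l * B >= s * p * B) by nra. nra. }
    nra.
  - rewrite Rabs_left in * by lra.
    set (B := C*a - K*b + C).
    assert (HB : c * A - s * B >= 0) by (unfold A, B; nra).
    cut (0 <= p * A + l * B); [unfold A, B; nra|].
    destruct (Rle_lt_dec B 0). { nra. }
    assert (c * (p*A + l*B) >= 0).
    { assert (c * (-l) * B <= s * p * B) by nra. nra. }
    nra.
Qed.

Lemma core_pos k g n X Y p l :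
  0 < g -> 14 * g <= PI -> (4 * INR k + 3) * g = PI/2 ->
  (1 <= n <= k+1)%nat ->
  let a := cos (INR n * (4*g)) in let b := sin (INR n * (4*g)) in
  X = b*p + a*l -> Y = a*p - b*l -> 0 < p -> cos (2*g) * Rabs l <= sin (2*g) * p -> 0 < Y ->
  Kg g * p + Cg g * Rabs l <= Kg g * Y + Cg g * Rabs X.
Proof.
  intros H0 H1 Hm Hn a b HX HY Hp Hl HY0.
  destruct (CK_pos g H0 H1) as [HC HK].
  destruct (basic_g g H0 H1) as (?&?&?&?&?&?&?).
  assert (Hn1 : 1 <= INR n) by (apply (le_INR 1); lia).
  assert (Hk : INR n <= INR k + 1) by (rewrite <- S_INR; apply le_INR; lia).
  destruct (Nat.eq_dec n (k+1)) as [E|E].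
  -
    assert (Ea : INR n * (4*g) = PI/2 - (- g)).
    { rewrite E, plus_INR. simpl INR. lra. }
    unfold a, b in *. rewrite Ea, cos_shift, sin_shift, sin_neg, cos_neg in *.
    pose proof (ident1 g H0 H1) as I1. pose proof (ident1b g H0 H1) as I1b.
    assert (Hl0 : l < 0).
    { assert (0 < sin g * p) by (apply Rmult_lt_0_compat; lra). assert (cos g * l < 0) by lra. nra. }
    rewrite (Rabs_left l) by lra.
    assert (Cg g * X <= Cg g * Rabs X) by (apply Rmult_le_compat_l; [lra| apply Rle_abs]).
    assert (Kg g = Cg g * cos g - Kg g * sin g) by lra.
    cut (Kg g * p + Cg g * - l <= Kg g * Y + Cg g * X); [lra|].
    rewrite HX, HY.
    replace (Kg g * (- sin g * p - cos g * l) + Cg g * (cos g * p + - sin g * l))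
      with (p * (Cg g * cos g - Kg g * sin g) - l * (Kg g * cos g + Cg g * sin g)) by ring.
    rewrite <- H9, <- I1b. lra.
  - assert (Hk' : INR n <= INR k).
    { apply le_INR; lia. }
    assert (INR n * g <= INR k * g) by (apply Rmult_le_compat_r; lra).
    assert (g <= INR n * g) by nra.
    apply (right_core (Cg g) (Kg g) (cos (2*g)) (sin (2*g)) a b); try lra.
    + pose proof (G_ge g (PI/2 - (INR n * (4*g) - 2*g)) H0 H1) as G.
      rewrite cos_shift, sin_shift, sin_minus, cos_minus in G. fold a b in G.
      apply G; nra.
    + pose proof (G_ge g (PI/2 - (INR n * (4*g) + 2*g)) H0 H1) as G.
      rewrite cos_shift, sin_shift, sin_plus, cos_plus in G. fold a b in G.
      replace (Cg g * (b * cos (2 * g) + a * sin (2 * g)) + Kg g * (a * cos (2 * g) - b * sin (2 * g)))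
        with (Cg g * (b * cos (2 * g) + cos (INR n * (4 * g)) * sin (2 * g)) +
              Kg g * (cos (INR n * (4 * g)) * cos (2 * g) - sin (INR n * (4 * g)) * sin (2 * g))) by reflexivity.
      apply G; nra.
Qed.

Lemma cos_2PI_minus x : cos (2*PI - x) = cos x.
Proof. replace (2*PI - x) with (-x + 2 * INR 1 * PI) by (simpl; ring).
  rewrite cos_period, cos_neg. auto. Qed.
Lemma sin_2PI_minus x : sin (2*PI - x) = - sin x.
Proof. replace (2*PI - x) with (-x + 2 * INR 1 * PI) by (simpl; ring).
  rewrite sin_period, sin_neg. auto. Qed.

Lemma cone_change k g n X Y p l :
  0 < g -> 14 * g <= PI -> (4 * INR k + 3) * g = PI/2 ->
  (n < 4*k+3)%nat ->
  let a := cos (INR n * (4*g)) in let b := sin (INR n * (4*g)) in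
  p = a*Y + b*X -> l = a*X - b*Y -> 0 < p -> cos (2*g) * Rabs l <= sin (2*g) * p -> 0 < Y ->
  Kg g * p + Cg g * Rabs l <= Kg g * Y + Cg g * Rabs X.
Proof.
  intros H0 H1 Hm Hn a b Hp Hl Hp0 Hlb HY0.
  destruct (CK_pos g H0 H1) as [HC HK].
  destruct (basic_g g H0 H1) as (?&?&?&?&?&?&?).
  assert (Hab : a*a + b*b = 1) by (pose proof (sin2_cos2 (INR n * (4*g))) as HH; unfold Rsqr in HH; unfold a, b; lra).
  assert (HX : X = b*p + a*l) by (rewrite Hp, Hl; replace X with (X * (a*a+b*b)) at 1 by (rewrite Hab; ring); ring).
  assert (HY : Y = a*p - b*l) by (rewrite Hp, Hl; replace Y with (Y * (a*a+b*b)) at 1 by (rewrite Hab; ring); ring).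
  destruct (Nat.eq_dec n 0) as [E0|E0].
  { subst n. unfold a, b in *. simpl INR in *. rewrite Rmult_0_l, cos_0, sin_0 in *.
    replace p with Y by lra. replace l with X by lra. lra. }
  destruct (Compare_dec.le_lt_dec n (k+1)) as [E1|E1].
  { apply (core_pos k g n X Y p l); auto; lia. }
  assert (HnR : INR n < 4 * INR k + 3).
  { replace (4 * INR k + 3) with (INR (4*k+3)) by (rewrite plus_INR, mult_INR; simpl; ring).
    apply lt_INR; auto. }
  destruct (Compare_dec.le_lt_dec n (3*k+1)) as [E2|E2].
  - exfalso.
    assert (Hn1 : INR k + 2 <= INR n) by (replace 2 with (INR 2) by (simpl; ring); rewrite <- plus_INR; apply le_INR; lia).
    assert (Hn2 : INR n <= 3 * INR k + 1) by (replace (3 * INR k + 1) with (INR (3*k+1)) by (rewrite plus_INR, mult_INR; simpl; ring); apply le_INR; lia).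
    assert (INR k * g + 2 * g <= INR n * g) by nra.
    assert (INR n * g <= 3 * INR k * g + g) by nra.
    assert (Hneg : a * cos (2*g) + sin (2*g) * Rabs b < 0).
    { destruct (Rle_lt_dec 0 b).
      - rewrite Rabs_right by lra.
        replace (a * cos (2*g) + sin (2*g) * b) with (cos (INR n * (4*g) - 2*g)) by (rewrite cos_minus; unfold a, b; ring).
        apply cos_lt_0; nra.
      - rewrite Rabs_left by lra.
        replace (a * cos (2*g) + sin (2*g) * - b) with (cos (INR n * (4*g) + 2*g)) by (rewrite cos_plus; unfold a, b; ring).
        apply cos_lt_0; nra. }
    assert (- b * l <= Rabs b * Rabs l).
    { rewrite <- Rabs_mult. replace (-b*l) with (-(b*l)) by ring. apply Rle_trans with (Rabs (-(b*l))); [apply Rle_abs|].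
      rewrite Rabs_Ropp. lra. }
    assert (cos (2*g) * Y <= p * (a * cos (2*g) + sin (2*g) * Rabs b)).
    { rewrite HY. assert (cos (2*g) * (Rabs b * Rabs l) <= Rabs b * (sin (2*g) * p)).
      { replace (cos (2*g) * (Rabs b * Rabs l)) with (Rabs b * (cos (2*g) * Rabs l)) by ring.
        apply Rmult_le_compat_l; auto. apply Rabs_pos. }
      nra. }
    assert (p * (a * cos (2*g) + sin (2*g) * Rabs b) < 0) by nra.
    nra.
  -
    set (n' := (4*k+3 - n)%nat).
    assert (En : INR n * (4*g) = 2*PI - INR n' * (4*g)).
    { unfold n'. rewrite minus_INR by lia. rewrite plus_INR, mult_INR. simpl INR. lra. }
    assert (Ea : a = cos (INR n' * (4*g))) by (unfold a; rewrite En, cos_2PI_minus; auto).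
    assert (Eb : b = - sin (INR n' * (4*g))) by (unfold b; rewrite En, sin_2PI_minus; auto).
    assert (HR := core_pos k g n' (-X) Y p (-l) H0 H1 Hm ltac:(unfold n'; lia)).
    simpl in HR. rewrite !Rabs_Ropp in HR. apply HR; auto;
      try (rewrite ?HX, ?HY, Ea, Eb; ring); try (rewrite Rabs_Ropp; auto).
Qed.


Definition lat (m i : nat) (u v : pt) : R :=
  (fst v - fst u) * sin (bis_angle m i) - (snd v - snd u) * cos (bis_angle m i).

Lemma sq_sum m i u v : (proj m i u v)^2 + (lat m i u v)^2 = (edist u v)^2.
Proof.
  unfold proj, lat, edist. rewrite pow2_sqrt by (apply Rplus_le_le_0_compat; apply pow2_ge_0).
  pose proof (sin2_cos2 (bis_angle m i)) as HH. unfold Rsqr in HH.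
  set (cb := cos (bis_angle m i)) in *. set (sb := sin (bis_angle m i)) in *.
  set (dx := fst v - fst u). set (dy := snd v - snd u).
  replace ((dx * cb + dy * sb) ^ 2 + (dx * sb - dy * cb) ^ 2) with ((dx^2 + dy^2) * (sb*sb + cb*cb)) by ring.
  rewrite HH. ring.
Qed.

Lemma frame_change m i j u v :
  let a := cos (bis_angle m i - bis_angle m j) in
  let b := sin (bis_angle m i - bis_angle m j) in
  proj m j u v = a * proj m i u v + b * lat m i u v /\
  lat m j u v = a * lat m i u v - b * proj m i u v.
Proof.
  intros a b. unfold a, b, proj, lat. rewrite cos_minus, sin_minus.
  pose proof (sin2_cos2 (bis_angle m i)) as HH. unfold Rsqr in HH.
  set (ci := cos (bis_angle m i)) in *. set (si := sin (bis_angle m i)) in *.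
  set (cj := cos (bis_angle m j)) in *. set (sj := sin (bis_angle m j)) in *.
  set (dx := fst v - fst u). set (dy := snd v - snd u).
  split.
  - replace (dx * cj + dy * sj) with ((dx * cj + dy * sj) * (si*si + ci*ci)) at 1 by (rewrite HH; ring). ring.
  - replace (dx * sj - dy * cj) with ((dx * sj - dy * cj) * (si*si + ci*ci)) at 1 by (rewrite HH; ring). ring.
Qed.

Lemma proj_lin m i u v w : proj m i v w = proj m i u w - proj m i u v.
Proof. unfold proj. ring. Qed.
Lemma lat_lin m i u v w : lat m i v w = lat m i u w - lat m i u v.
Proof. unfold lat. ring. Qed.

Lemma edist_pos u v : u <> v -> 0 < edist u v.
Proof.
  intros H. unfold edist. apply sqrt_lt_R0.
  destruct u as [x1 y1], v as [x2 y2]; simpl.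
  destruct (Req_dec x1 x2); destruct (Req_dec y1 y2); subst; try (exfalso; apply H; reflexivity); nra.
Qed.

Lemma edist_ge0 u v : 0 <= edist u v.
Proof. unfold edist. apply sqrt_pos. Qed.

Lemma in_cone_facts m i u v :
  0 < cos (theta m / 2) -> 0 <= sin (theta m / 2) ->
  in_cone m i u v ->
  0 < proj m i u v /\ cos (theta m / 2) * Rabs (lat m i u v) <= sin (theta m / 2) * proj m i u v
  /\ cos (theta m / 2) * edist u v <= proj m i u v.
Proof.
  intros Hc Hs [Hi [Hne Hp]].
  pose proof (edist_pos u v (fun e => Hne (eq_sym e))) as Hr.
  pose proof (sq_sum m i u v) as Hq.
  pose proof (sin2_cos2 (theta m / 2)) as HH. unfold Rsqr in HH.
  set (c := cos (theta m / 2)) in *. set (s := sin (theta m / 2)) in *.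
  set (p := proj m i u v) in *. set (l := lat m i u v) in *. set (r := edist u v) in *.
  assert (0 < r * c) by (apply Rmult_lt_0_compat; lra). assert (0 < p) by lra.
  repeat split; try lra.
  assert (c*c*r*r <= p*p) by nra.
  assert (c*c*(l*l) <= s*s*(p*p)) by nra.
  assert (l*l = Rabs l * Rabs l) by (rewrite <- Rabs_mult; rewrite Rabs_right; nra).
  pose proof (Rabs_pos l).
  destruct (Rle_lt_dec (c * Rabs l) (s * p)) as [E|E]; auto.
  assert (0 <= s * p) by nra.
  assert (s*p*(s*p) < c * Rabs l * (c * Rabs l)) by (apply Rmult_le_0_lt_compat; lra).
  nra.
Qed.


Lemma cos_abs_le u a : Rabs u <= a -> a <= PI -> cos a <= cos u.
Proof.
  intros H1 H2.
  assert (cos u = cos (Rabs u)).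
  { destruct (Rle_lt_dec 0 u). rewrite Rabs_right by lra; auto. rewrite Rabs_left by lra. rewrite cos_neg; auto. }
  rewrite H. pose proof (Rabs_pos u).
  destruct (Req_dec (Rabs u) a). { subst; lra. }
  left. apply cos_decreasing_1; lra.
Qed.

Lemma cone_exists m v w : (1 <= m)%nat -> v <> w -> exists j, in_cone m j v w.
Proof.
  intros Hm Hne.
  pose proof (edist_pos v w Hne) as Hr.
  pose proof PI_RGT_0 as HPI.
  set (r := edist v w) in *.
  set (dx := fst w - fst v). set (dy := snd w - snd v).
  assert (Hr2 : r * r = dx*dx + dy*dy).
  { unfold r, edist. rewrite sqrt_sqrt by (apply Rplus_le_le_0_compat; apply pow2_ge_0). fold dx dy. ring. }
  set (x0 := dx / r).
  assert (Hx0 : -1 <= x0 <= 1).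
  { assert (Habs : -r <= dx <= r).
    { assert (Rabs dx <= Rabs r) by (apply (Rsqr_le_abs_0 dx r); unfold Rsqr; nra).
      rewrite (Rabs_right r) in H by lra. destruct (Rle_lt_dec 0 dx); [rewrite Rabs_right in H by lra| rewrite Rabs_left in H by lra]; lra. }
    unfold x0. split.
    - apply (Rmult_le_reg_r r); auto. replace (dx/r*r) with dx by (field; lra). lra.
    - apply (Rmult_le_reg_r r); auto. replace (dx/r*r) with dx by (field; lra). lra. }
  assert (HA : Rabs dy * Rabs dy = dy * dy) by (rewrite <- Rabs_mult; apply Rabs_right; nra).
  assert (Hsq : sqrt (1 - x0²) = Rabs dy / r).
  { assert (E : 1 - x0² = (Rabs dy / r) * (Rabs dy / r)).
    { unfold Rsqr, x0. replace (Rabs dy / r * (Rabs dy / r)) with ((Rabs dy * Rabs dy) / (r*r)) by (field; lra).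
      rewrite HA. replace (dy*dy) with (r*r - dx*dx) by lra. field. lra. }
    rewrite E. apply sqrt_square. unfold Rdiv; apply Rmult_le_pos; [apply Rabs_pos| left; apply Rinv_0_lt_compat; lra]. }
  assert (Hphi : exists phi, cos phi = dx / r /\ sin phi = dy / r /\ PI/2 <= PI/2 - phi <= 5*PI/2).
  { pose proof (acos_bound x0) as Hab.
    destruct (Rle_lt_dec 0 dy) as [Hd|Hd].
    - exists (acos x0 - 2*PI).
      rewrite <- (cos_period (acos x0 - 2*PI) 1), <- (sin_period (acos x0 - 2*PI) 1).
      replace (acos x0 - 2 * PI + 2 * INR 1 * PI) with (acos x0) by (simpl; ring).
      rewrite cos_acos, sin_acos by auto. rewrite Hsq, Rabs_right by lra.
      split; [auto|split; [auto| lra]].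
    - exists (- acos x0). rewrite cos_neg, sin_neg, cos_acos, sin_acos by auto.
      rewrite Hsq, Rabs_left by auto. split; [auto|split; [field; lra| lra]]. }
  destruct Hphi as (phi & Hc & Hs & Hz).
  assert (HmR : 1 <= INR m) by (apply (le_INR 1); auto).
  set (th := theta m).
  assert (Hth : th * INR m = 2 * PI) by (unfold th, theta; field; lra).
  assert (Hth0 : 0 < th) by (unfold th, theta; apply Rdiv_lt_0_compat; lra).
  set (x := (PI/2 - phi) / th).
  assert (Hxth : x * th = PI/2 - phi) by (unfold x; field; lra).
  set (N := up (x - 1/2)).
  destruct (archimed (x - 1/2)) as [HN1 HN2]. fold N in HN1, HN2.
  assert (HN0 : (0 <= N)%Z).
  { assert (0 < x) by nra.
    assert (Hm1 : IZR (-1) < IZR N) by (simpl; lra). apply lt_IZR in Hm1. lia. }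
  set (jn := Z.to_nat N).
  assert (Hjn : INR jn = IZR N) by (unfold jn; rewrite INR_IZR_INZ, Z2Nat.id; auto).
  assert (Hx2 : x * th <= 5/2 * PI) by lra.
  assert (Hjn2 : INR jn < 2 * INR m).
  { assert (x <= 5/4 * INR m).
    { apply (Rmult_le_reg_r th); auto. replace (5/4*INR m*th) with (5/4*(th*INR m)) by ring. rewrite Hth. lra. }
    lra. }
  assert (Hclose : Rabs ((INR jn - x) * th) <= th / 2).
  { rewrite Rabs_mult, (Rabs_right th) by lra. apply Rabs_le in HN1 || idtac.
    assert (Rabs (INR jn - x) <= 1/2) by (apply Rabs_le; lra).
    assert (Rabs (INR jn - x) * th <= 1/2 * th) by (apply Rmult_le_compat_r; lra). lra. }
  assert (Hcos : cos (th/2) <= cos ((INR jn - x) * th)).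
  { apply cos_abs_le; auto. assert (th <= 2 * PI).
    { rewrite <- Hth. assert (th * 1 <= th * INR m) by (apply Rmult_le_compat_l; lra). lra. }
    lra. }
  assert (Hpj : forall j, proj m j v w = r * cos (phi - bis_angle m j)).
  { intro j. unfold proj. rewrite cos_minus. fold dx dy.
    replace dx with (r * (dx / r)) by (field; lra). replace dy with (r * (dy / r)) by (field; lra).
    rewrite <- Hc, <- Hs. ring. }
  assert (Hne' : w <> v) by (intro E; apply Hne; auto).
  destruct (Compare_dec.lt_dec jn m) as [Hlt|Hge].
  - exists jn. split; [auto| split; [auto|]].
    rewrite Hpj. fold r.
    replace (phi - bis_angle m jn) with ((INR jn - x) * th) by (unfold bis_angle; fold th; nra).
    fold th. nra.
  - assert (jn < 2*m)%nat by (apply INR_lt; rewrite mult_INR; simpl INR; lra).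
    exists (jn - m)%nat. split; [lia| split; [auto|]].
    rewrite Hpj. fold r.
    replace (phi - bis_angle m (jn - m)) with ((INR jn - x) * th + 2 * INR 1 * PI * (-1))
      by (unfold bis_angle; fold th; rewrite minus_INR by lia; simpl INR; nra).
    rewrite <- (cos_period _ 1).
    replace ((INR jn - x) * th + 2 * INR 1 * PI * -1 + 2 * INR 1 * PI) with ((INR jn - x) * th) by ring.
    fold th. nra.
Qed.


Lemma exists_min (f : pt -> R) (Q : pt -> Prop) (P : list pt) :
  (exists w, In w P /\ Q w) -> exists v, In v P /\ Q v /\ forall w, In w P -> Q w -> f v <= f w.
Proof.
  induction P as [|a P IH]; intros [w [Hw Hq]]; [destruct Hw|].
  destruct (classic (exists w, In w P /\ Q w)) as [He|Hn].
  - destruct (IH He) as (v & Hv & Hqv & Hmin).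
    destruct (classic (Q a /\ f a < f v)) as [[Qa Ha]|Hna].
    + exists a. split; [left; auto| split; auto]. intros z [<-|Hz] Qz; [lra|].
      specialize (Hmin z Hz Qz). lra.
    + exists v. split; [right; auto| split; auto]. intros z [<-|Hz] Qz; auto.
      destruct (Rle_lt_dec (f v) (f a)); auto. exfalso; apply Hna; auto.
  - destruct Hw as [<-|Hw]; [|exfalso; apply Hn; eauto].
    exists a. split; [left; auto| split; auto]. intros z [<-|Hz] Qz; [lra|].
    exfalso; apply Hn; eauto.
Qed.

Lemma filter_le {A} (f g : A -> bool) (l : list A) :
  (forall x, In x l -> f x = true -> g x = true) -> (length (filter f l) <= length (filter g l))%nat.
Proof.
  induction l as [|a l IH]; simpl; intros H; auto.
  assert (IH' := IH (fun x Hx => H x (or_intror Hx))).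
  destruct (f a) eqn:Ef; destruct (g a) eqn:Eg; simpl; try lia.
  rewrite (H a (or_introl eq_refl) Ef) in Eg. discriminate.
Qed.

Lemma filter_lt {A} (f g : A -> bool) (l : list A) y :
  (forall x, In x l -> f x = true -> g x = true) -> In y l -> f y = false -> g y = true ->
  (length (filter f l) < length (filter g l))%nat.
Proof.
  induction l as [|a l IH]; simpl; intros H Hy Fy Gy; [destruct Hy|].
  assert (H' := fun x Hx => H x (or_intror Hx)).
  destruct Hy as [->|Hy].
  - rewrite Fy, Gy. simpl. pose proof (filter_le f g l H'). lia.
  - specialize (IH H' Hy Fy Gy).
    destruct (f a) eqn:Ef; destruct (g a) eqn:Eg; simpl; try lia.
    rewrite (H a (or_introl eq_refl) Ef) in Eg. discriminate.
Qed.

Definition rank (P : list pt) (d : R) : nat :=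
  length (filter (fun pr => if Rlt_dec (edist (fst pr) (snd pr)) d then true else false) (list_prod P P)).

Lemma rank_lt P v w d : In v P -> In w P -> edist v w < d -> (rank P (edist v w) < rank P d)%nat.
Proof.
  intros Hv Hw Hd. unfold rank. apply filter_lt with (y := (v, w)).
  - intros [a b] _. simpl. destruct (Rlt_dec (edist a b) (edist v w)); [|discriminate].
    destruct (Rlt_dec (edist a b) d); auto; lra.
  - apply in_prod; auto.
  - simpl. destruct (Rlt_dec (edist v w) (edist v w)); auto; lra.
  - simpl. destruct (Rlt_dec (edist v w) d); auto; lra.
Qed.

Lemma dist_pure c s Pv Pw Lv Lw : 0 < c -> 0 <= s -> 3 * (s*s) < c*c -> 0 < Pv -> Pv < Pw ->
  c * Rabs Lv <= s * Pv -> c * Rabs Lw <= s * Pw ->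
  (Pw - Pv)^2 + (Lw - Lv)^2 < Pw^2 + Lw^2.
Proof.
  intros Hc Hs H3 Hv Hvw Hlv Hlw.
  assert (E : (Pw - Pv)^2 + (Lw - Lv)^2 - (Pw^2 + Lw^2) = Lv*Lv - 2*Lw*Lv + Pv*Pv - 2*Pw*Pv) by ring.
  assert (H1 : - (Lw*Lv) <= Rabs Lw * Rabs Lv).
  { rewrite <- Rabs_mult. replace (-(Lw*Lv)) with (-(Lw*Lv)) by ring.
    eapply Rle_trans; [apply Rle_abs|]. rewrite Rabs_Ropp. lra. }
  assert (H2 : Lv * Lv = Rabs Lv * Rabs Lv) by (rewrite <- Rabs_mult, Rabs_right; nra).
  pose proof (Rabs_pos Lv). pose proof (Rabs_pos Lw).
  assert (H4 : c * Rabs Lw * (c * Rabs Lv) <= s * Pw * (s * Pv)) by (apply Rmult_le_compat; nra).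
  assert (H5 : c * Rabs Lv * (c * Rabs Lv) <= s * Pv * (s * Pv)) by (apply Rmult_le_compat; nra).
  assert (H6 : c*c * (Lv*Lv - 2*Lw*Lv + Pv*Pv - 2*Pw*Pv) <= Pv * Pw * (3*(s*s) - c*c)).
  { assert (Pv * Pv <= Pv * Pw) by nra.
    assert (s*s*(Pv*Pv) <= s*s*(Pv*Pw)) by (apply Rmult_le_compat_l; nra).
    assert (c*c*(Pv*Pv) <= c*c*(Pv*Pw)) by (apply Rmult_le_compat_l; nra).
    nra. }
  assert (Pv * Pw * (3*(s*s) - c*c) < 0).
  { assert (0 < Pv * Pw) by nra. nra. }
  nra.
Qed.


Lemma angle_reduce m i j : (i < m)%nat -> (j < m)%nat ->
  exists n, (n < m)%nat /\ cos (bis_angle m i - bis_angle m j) = cos (INR n * theta m)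
    /\ sin (bis_angle m i - bis_angle m j) = sin (INR n * theta m).
Proof.
  intros Hi Hj.
  assert (Hm : INR m * theta m = 2 * PI).
  { unfold theta. field. apply not_0_INR. lia. }
  assert (E : bis_angle m i - bis_angle m j = (INR j - INR i) * theta m) by (unfold bis_angle; ring).
  rewrite E.
  destruct (Compare_dec.le_lt_dec i j) as [H|H].
  - exists (j - i)%nat. rewrite minus_INR by lia. split; [lia| auto].
  - exists (j + m - i)%nat. split; [lia|].
    rewrite minus_INR, plus_INR by lia.
    replace ((INR j + INR m - INR i) * theta m) with ((INR j - INR i) * theta m + 2 * INR 1 * PI)
      by (simpl INR; nra).
    rewrite cos_period, sin_period. auto.
Qed.

Definition Bd (m i : nat) (u v : pt) : R :=
  Kg (theta m / 4) * proj m i u v + Cg (theta m / 4) * Rabs (lat m i u v).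


Lemma main_ind k P : (1 <= k)%nat -> general_position (4*k+3) P ->
  forall n u w i, (rank P (edist u w) < n)%nat -> In u P -> In w P -> in_cone (4*k+3) i u w ->
  exists l, is_path (theta_edge (4*k+3) P) u l w /\ path_length u l <= Bd (4*k+3) i u w.
Proof.
  intros Hk GP. set (m := (4*k+3)%nat).
  set (g := theta m / 4).
  assert (HmR : INR m = 4 * INR k + 3) by (unfold m; rewrite plus_INR, mult_INR; simpl; ring).
  assert (HkR : 1 <= INR k) by (apply (le_INR 1); auto).
  pose proof PI_RGT_0 as HPI.
  assert (Hg0 : 0 < g) by (unfold g, theta; apply Rdiv_lt_0_compat; [apply Rdiv_lt_0_compat|]; lra).
  assert (Hgm : (4 * INR k + 3) * g = PI/2) by (unfold g, theta; rewrite HmR; field; lra).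
  assert (Hg14 : 14 * g <= PI) by nra.
  assert (Hth : theta m = 4 * g) by (unfold g; field).
  assert (Hth2 : theta m / 2 = 2 * g) by (unfold g; field).
  destruct (basic_g g Hg0 Hg14) as (Hsg & Hcg & Hc & Hs & Hs2 & HD & _).
  destruct (CK_pos g Hg0 Hg14) as [HC HK].
  set (c := cos (2*g)) in *. set (s := sin (2*g)) in *.
  assert (HKe : Kg g = 1/c + Cg g * (s/c)) by reflexivity.
  assert (Hsc : s*s + c*c = 1) by (pose proof (sin2_cos2 (2*g)) as HH; unfold Rsqr in HH; fold s c in HH; lra).
  assert (H3 : 3 * (s*s) < c*c) by nra.
  assert (Hcone : forall i u v, in_cone m i u v ->
     0 < proj m i u v /\ c * Rabs (lat m i u v) <= s * proj m i u v /\ c * edist u v <= proj m i u v).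
  { intros i0 u0 v0 Hin. pose proof (in_cone_facts m i0 u0 v0) as F. rewrite Hth2 in F. fold c s in F. apply F; auto; lra. }
  intro n. induction n as [|n IH]; intros u w i Hr Hu Hw Hin; [lia|].
  destruct (exists_min (proj m i u) (in_cone m i u) P ltac:(exists w; auto)) as (v & Hv & Hinv & Hmin).
  assert (Hedge : theta_edge m P u v).
  { left. split; [auto| split; [auto|]]. exists i. split; auto. }
  destruct (Hcone i u w Hin) as (Hpw & Hlw & Hdw).
  destruct (Hcone i u v Hinv) as (Hpv & Hlv & Hdv).
  assert (HBd : Bd m i u w = Kg g * proj m i u w + Cg g * Rabs (lat m i u w)) by reflexivity.
  destruct (classic (v = w)) as [Evw|Nvw].
  - subst v. exists (w :: nil). split; [split; [auto| simpl; reflexivity]|].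
    simpl path_length. rewrite HBd.
    assert (edist u w <= proj m i u w / c) by (apply (Rmult_le_reg_l c); [lra|]; field_simplify; lra).
    assert (0 <= Cg g * (s / c) * proj m i u w).
    { apply Rmult_le_pos; [apply Rmult_le_pos; [lra| unfold Rdiv; apply Rmult_le_pos; [lra| left; apply Rinv_0_lt_compat; lra]]| lra]. }
    pose proof (Rabs_pos (lat m i u w)).
    assert (0 <= Cg g * Rabs (lat m i u w)) by (apply Rmult_le_pos; lra).
    rewrite HKe. replace (proj m i u w / c) with (1/c * proj m i u w) in H by (field; lra). nra.
  - set (Pv := proj m i u v) in *. set (Pw := proj m i u w) in *.
    set (Lv := lat m i u v) in *. set (Lw := lat m i u w) in *.
    assert (HY : proj m i v w = Pw - Pv) by (unfold Pw, Pv; apply proj_lin).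
    assert (HX : lat m i v w = Lw - Lv) by (unfold Lw, Lv; apply lat_lin).
    assert (Hi : (i < m)%nat) by apply Hin.
    assert (HY0 : 0 < Pw - Pv).
    { destruct GP as [_ [GP2 _]]. pose proof (GP2 v w i Hv Hw Nvw Hi) as G. fold m in G.
      rewrite HY in G. pose proof (Hmin w Hw Hin) as HH. fold Pw Pv in HH. lra. }
    assert (Hdist : edist v w < edist u w).
    { pose proof (sq_sum m i v w) as S1. pose proof (sq_sum m i u w) as S2.
      rewrite HY, HX in S1. fold Pw Lw in S2.
      pose proof (dist_pure c s Pv Pw Lv Lw Hc ltac:(lra) H3 Hpv ltac:(lra) Hlv Hlw).
      pose proof (edist_ge0 v w). pose proof (edist_ge0 u w).
      destruct (Rlt_le_dec (edist v w) (edist u w)); auto.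
      assert (edist u w * edist u w <= edist v w * edist v w) by (apply Rmult_le_compat; lra).
      nra. }
    assert (Hrk : (rank P (edist v w) < n)%nat).
    { pose proof (rank_lt P v w (edist u w) Hv Hw Hdist). lia. }
    destruct (cone_exists m v w ltac:(unfold m; lia) Nvw) as [j Hinj].
    destruct (IH v w j Hrk Hv Hw Hinj) as (l' & Hpath & Hlen).
    exists (v :: l'). split; [split; auto|].
    simpl path_length.
    destruct (Hcone j v w Hinj) as (Hpj & Hlj & _).
    destruct (frame_change m i j v w) as [F1 F2].
    assert (Hj : (j < m)%nat) by apply Hinj.
    destruct (angle_reduce m i j Hi Hj) as (n0 & Hn0 & Ea & Eb).
    rewrite Ea, Eb, Hth in F1, F2.
    rewrite HY, HX in F1, F2.
    pose proof (cone_change k g n0 (Lw - Lv) (Pw - Pv) (proj m j v w) (lat m j v w)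
                  Hg0 Hg14 Hgm ltac:(unfold m in Hn0; lia) F1 F2 Hpj Hlj HY0) as CC.
    assert (HB2 : Bd m j v w = Kg g * proj m j v w + Cg g * Rabs (lat m j v w)) by reflexivity.
    rewrite HB2 in Hlen. rewrite HBd.
    assert (Rabs (Lw - Lv) <= Rabs Lw + Rabs Lv).
    { unfold Rminus. eapply Rle_trans; [apply Rabs_triang|]. rewrite Rabs_Ropp. lra. }
    assert (Cg g * Rabs (Lw - Lv) <= Cg g * (Rabs Lw + Rabs Lv)) by (apply Rmult_le_compat_l; lra).
    assert (c * (edist u v + Cg g * Rabs Lv) <= c * (Kg g * Pv)).
    { rewrite HKe. replace (c * ((1 / c + Cg g * (s / c)) * Pv)) with (Pv + Cg g * (s * Pv)) by (field; lra).
      assert (Cg g * (c * Rabs Lv) <= Cg g * (s * Pv)) by (apply Rmult_le_compat_l; lra).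
      nra. }
    assert (edist u v + Cg g * Rabs Lv <= Kg g * Pv) by (apply (Rmult_le_reg_l c); lra).
    nra.
Qed.


Theorem mainTheorem11 :
  forall (k : nat) (P : list pt),
    (1 <= k)%nat ->
    let m := (4 * k + 3)%nat in
    let th := theta m in
    general_position m P ->
    forall (u w : pt) (i : nat),
      In u P -> In w P -> u <> w ->
      in_cone m i u w ->
      let alpha := uangle u w (tri_mid m i u w) in
      exists l : list pt,
        is_path (theta_edge m P) u l w /\
        path_length u l <=
          (cos alpha / cos (th / 2)
           + (cos alpha * tan (th / 2) + sin alpha) * cos (th / 4)
             / (cos (th / 2) - sin (3 * th / 4))) * edist u w.
Proof.
  intros k P Hk m th GP u w i Hu Hw Hne Hin alpha.
  destruct (main_ind k P Hk GP (S (rank P (edist u w))) u w i ltac:(lia) Hu Hw Hin) as (l & Hp & Hl).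
  exists l. split; auto. fold m in Hl.
  eapply Rle_trans; [apply Hl|]. right.
  set (g := theta m / 4).
  assert (HmR : INR m = 4 * INR k + 3) by (unfold m; rewrite plus_INR, mult_INR; simpl; ring).
  assert (HkR : 1 <= INR k) by (apply (le_INR 1); auto).
  pose proof PI_RGT_0 as HPI.
  assert (Hg0 : 0 < g) by (unfold g, theta; apply Rdiv_lt_0_compat; [apply Rdiv_lt_0_compat|]; lra).
  assert (Hgm : (4 * INR k + 3) * g = PI/2) by (unfold g, theta; rewrite HmR; field; lra).
  assert (Hg14 : 14 * g <= PI) by nra.
  destruct (basic_g g Hg0 Hg14) as (Hsg & Hcg & Hc & Hs & Hs2 & HD & _).
  assert (E2 : th / 2 = 2 * g) by (unfold th, g; field).
  assert (E3 : 3 * th / 4 = 3 * g) by (unfold th, g; field).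
  assert (E4 : th / 4 = g) by reflexivity.
  assert (Ht2 : theta m / 2 = 2 * g) by (unfold g; field).
  rewrite E2, E3, E4.
  pose proof (in_cone_facts m i u w) as F. rewrite Ht2 in F.
  destruct (F Hc ltac:(lra) Hin) as (Hh & Hlat & Hdist).
  pose proof (sq_sum m i u w) as Hsq.
  pose proof (edist_pos u w Hne) as Hr.
  set (h := proj m i u w) in *. set (la := lat m i u w) in *. set (r := edist u w) in *.
  set (b := bis_angle m i).
  assert (HM1 : fst (tri_mid m i u w) - fst u = h * cos b).
  { unfold tri_mid, tri_vertex. simpl. fold b h. rewrite Ht2.
    replace (b + -1 * (2*g)) with (b - 2*g) by ring. replace (b + 1 * (2*g)) with (b + 2*g) by ring.
    rewrite cos_plus, cos_minus. field. lra. }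
  assert (HM2 : snd (tri_mid m i u w) - snd u = h * sin b).
  { unfold tri_mid, tri_vertex. simpl. fold b h. rewrite Ht2.
    replace (b + -1 * (2*g)) with (b - 2*g) by ring. replace (b + 1 * (2*g)) with (b + 2*g) by ring.
    rewrite sin_plus, sin_minus. field. lra. }
  assert (HuM : edist u (tri_mid m i u w) = h).
  { unfold edist. rewrite HM1, HM2.
    pose proof (sin2_cos2 b) as HH. unfold Rsqr in HH.
    assert (EE : (h * cos b) ^ 2 + (h * sin b) ^ 2 = h * h).
    { transitivity (h*h*(sin b * sin b + cos b * cos b)); [ring| rewrite HH; ring]. }
    rewrite EE.
    apply sqrt_square. lra. }
  assert (Hratio : cos alpha = h / r /\ sin alpha = Rabs la / r).
  { unfold alpha, uangle. rewrite HM1, HM2, HuM.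
    replace ((fst w - fst u) * (h * cos b) + (snd w - snd u) * (h * sin b)) with (h * h)
      by (unfold h at 2; unfold proj; fold b; ring).
    fold r. replace (h * h / (r * h)) with (h / r) by (field; lra).
    assert (Hb1 : -1 <= h / r <= 1).
    { assert (h <= r) by nra. split.
      - apply (Rmult_le_reg_r r); auto. replace (h / r * r) with h by (field; lra). lra.
      - apply (Rmult_le_reg_r r); auto. replace (h / r * r) with h by (field; lra). lra. }
    rewrite cos_acos, sin_acos by auto. split; auto.
    assert (E : 1 - (h / r)² = (Rabs la / r) * (Rabs la / r)).
    { unfold Rsqr. replace (Rabs la / r * (Rabs la / r)) with ((Rabs la * Rabs la) / (r*r)) by (field; lra).
      rewrite <- Rabs_mult, Rabs_right by nra.
      replace (la * la) with (r*r - h*h) by nra. field. lra. }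
    rewrite E. apply sqrt_square. unfold Rdiv; apply Rmult_le_pos; [apply Rabs_pos| left; apply Rinv_0_lt_compat; lra]. }
  destruct Hratio as [Hca Hsa]. rewrite Hca, Hsa.
  unfold Bd, tan. fold g. unfold Kg, Cg. fold h la. field. split; lra.
Qed.
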